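(* Let $K$ be an oriented Legendrian knot and $(X,\ast,u,d)$ a finite GL-rack. Let $\Delta=\alpha_1\cdots\alpha_n$ be the disjoint cycle decomposition of its diagonal map (fixed points counted as $1$-cycles), $A_i=\operatorname{supp}(\alpha_i)$, and let $B_1,\dots,B_m$ be the sets obtained by taking, for each cycle length occurring, the union of all $A_i$ of that length, so that $X=\bigsqcup_j B_j$ and each $(B_j,\ast|_{B_j},u|_{B_j},d|_{B_j})$ is a GL-rack. Then $\operatorname{Col}_X(K)=\sum_{j=1}^m\operatorname{Col}_{B_j}(K)$.
   Context: A rack is a set $X$ with a binary operation $\ast$ such that for every $y\in X$ the map $x\mapsto x\ast y$ is a bijection of $X$ (inverse written $x\mapsto x\ast^{-1}y$) and $(x\ast y)\ast z=(x\ast z)\ast(y\ast z)$ for all $x,y,z$. A GL-rack is a quadruple $(X,\ast,u,d)$ where $(X,\ast)$ is a rack and $u,d\colon X\to X$ are maps such that for all $x,y\in X$: $u(d(x\ast x))=d(u(x\ast x))=x$; $u(x\ast y)=u(x)\ast y$ and $d(x\ast y)=d(x)\ast y$; $x\ast u(y)=x\ast d(y)=x\ast y$. Homomorphisms of GL-racks preserve $\ast,u,d$. The diagonal map is $\Delta(x)=x\ast x$; for a finite GL-rack it is a bijection and $\Delta=(u\circ d)^{-1}$. Legendrian knots lie in $(\mathbb{R}^3,\xi_{\mathrm{std}})$, $\xi_{\mathrm{std}}=\mathrm{span}\{\partial_y,\partial_x+y\partial_z\}$, and are represented by oriented front diagrams (projections to the $(x,z)$-plane) with crossings and cusps. Given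 a finite GL-rack $Y$ and a front diagram $D$ of $K$, a coloring is an assignment of elements of $Y$ to the semi-arcs of $D$ (segments bounded by undercrossings or cusps) such that, following the orientation through a cusp, the color changes from $x$ to $u(x)$ if the cusp is traversed upward and to $d(x)$ if traversed downward; and at each crossing whose over-strand is colored $y$, if the under semi-arc on the right of the oriented over-strand is colored $x$, the one on its left is colored $x\ast y$. The number $\operatorname{Col}_Y(K)$ of colorings is a Legendrian isotopy invariant, equal to $|\operatorname{Hom}(\operatorname{GLR}(K),Y)|$ where $\operatorname{GLR}(K)$ is the fundamental GL-rack of $K$ (generated by the arcs of $D$ subject to these relations). *)

(* Defs.v *)
From mathcomp Require Import all_boot.
Set Implicit Arguments. Unset Strict Implicit. Unset Printing Implicit Defensive.

Record GLRack (X : finType) := {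
  glop : X -> X -> X;
  glu : X -> X;
  gld : X -> X;
  glop_bij : forall y : X, bijective (fun x => glop x y);
  glop_dist : forall x y z, glop (glop x y) z = glop (glop x z) (glop y z);
  glud_diag : forall x, glu (gld (glop x x)) = x;
  gldu_diag : forall x, gld (glu (glop x x)) = x;
  glu_op : forall x y, glu (glop x y) = glop (glu x) y;
  gld_op : forall x y, gld (glop x y) = glop (gld x) y;
  glop_u : forall x y, glop x (glu y) = glop x y;
  glop_d : forall x y, glop x (gld y) = glop x y
}.

Definition diag (X : finType) (R : GLRack X) (x : X) : X := glop R x x.

Definition cyclen (X : finType) (R : GLRack X) (x : X) : nat := order (diag R) x.

Definition Bset (X : finType) (R : GLRack X) (k : nat) : {set X} :=
  [set x | cyclen R x == k].

Definition cycle_lengths (X : finType) (R : GLRack X) : seq nat :=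
  undup [seq cyclen R x | x <- enum X].

(* Combinatorial data of an oriented front diagram of a knot with N semi-arcs.
   Semi-arcs are indexed by 'I_N in the order met when following the
   orientation; semi-arc (ordS i) follows semi-arc i.  The passage from
   semi-arc i to semi-arc (ordS i) is either a cusp traversed upward, a cusp
   traversed downward, or an undercrossing whose over-strand lies on semi-arc
   o; the boolean says whether semi-arc i is the under semi-arc on the right
   of the oriented over-strand (true) or on its left (false). *)
Inductive passage (N : nat) :=
  | CuspUp
  | CuspDown
  | Under of 'I_N & bool.

Definition front (N : nat) := 'I_N -> passage N.

Definition is_coloring (X : finType) (R : GLRack X) (N : nat) (D : front N)
    (f : 'I_N -> X) : bool :=
  [forall i : 'I_N,
    match D i with
    | CuspUp => f (ordS i) == glu R (f i)
    | CuspDown => f (ordS i) == gld R (f i)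
    | Under o true => f (ordS i) == glop R (f i) (f o)
    | Under o false => f i == glop R (f (ordS i)) (f o)
    end].

(* Number of colorings of D by the sub-GL-rack B of X (operations restricted):
   colorings of D all of whose colors lie in B. *)
Definition Col_in (X : finType) (R : GLRack X) (B : {set X}) (N : nat)
    (D : front N) : nat :=
  #|[set f : {ffun 'I_N -> X} | is_coloring R D f && [forall i, f i \in B]]|.

Definition Col (X : finType) (R : GLRack X) (N : nat) (D : front N) : nat :=
  Col_in R [set: X] D.

(* Main.v *)
Require Import Defs.
From mathcomp Require Import all_boot.
Set Implicit Arguments. Unset Strict Implicit. Unset Printing Implicit Defensive.

Section Aux.
Variables (X : finType) (R : GLRack X).

Lemma iter_comm (g : X -> X) : (forall x, g (diag R x) = diag R (g x)) ->
  forall n x, iter n (diag R) (g x) = g (iter n (diag R) x).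
Proof. by move=> H; elim=> [|n IH] x //=; rewrite IH H. Qed.

Lemma cyclen_comm (g : X -> X) : injective g ->
  (forall x, g (diag R x) = diag R (g x)) -> forall x, cyclen R (g x) = cyclen R x.
Proof.
move=> inj H x; rewrite /cyclen /order -(card_imset (mem (fconnect (diag R) x)) inj).
apply: eq_card => y; apply/idP/imsetP.
- move=> /iter_findex <-; rewrite iter_comm //; eexists; last reflexivity.
  exact: fconnect_iter.
- by case=> z /iter_findex <- ->; rewrite -iter_comm //; apply: fconnect_iter.
Qed.

Lemma diag_inj : injective (diag R).
Proof. by move=> a b E; rewrite -(glud_diag R a) -(glud_diag R b); congr (glu _ (gld _ _)). Qed.

Lemma diag_surj y : exists x, y = diag R x.
Proof.
have [h hK Kh] := injF_bij diag_inj. by exists (h y); rewrite Kh.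
Qed.

Lemma u_inj : injective (glu R).
Proof.
move=> a b; have [x ->] := diag_surj a; have [y ->] := diag_surj b.
by move/(congr1 (gld R)); rewrite /diag !gldu_diag => ->.
Qed.

Lemma d_inj : injective (gld R).
Proof.
move=> a b; have [x ->] := diag_surj a; have [y ->] := diag_surj b.
by move/(congr1 (glu R)); rewrite /diag !glud_diag => ->.
Qed.

Lemma cyclen_u x : cyclen R (glu R x) = cyclen R x.
Proof.
apply: cyclen_comm; first exact: u_inj.
by move=> z; rewrite /diag glu_op glop_u.
Qed.

Lemma cyclen_d x : cyclen R (gld R x) = cyclen R x.
Proof.
apply: cyclen_comm; first exact: d_inj.
by move=> z; rewrite /diag gld_op glop_d.
Qed.

Lemma cyclen_op x y : cyclen R (glop R x y) = cyclen R x.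
Proof.
apply: (@cyclen_comm (fun z => glop R z y)).
- exact: bij_inj (glop_bij R y).
- by move=> z; rewrite /diag glop_dist.
Qed.

Lemma coloring_step N (D : front N) f i : is_coloring R D f ->
  cyclen R (f (ordS i)) = cyclen R (f i).
Proof.
move=> /forallP /(_ i); case: (D i) => [| |o []] /eqP ->.
- exact: cyclen_u.
- exact: cyclen_d.
- exact: cyclen_op.
- by rewrite cyclen_op.
Qed.

Lemma coloring_const n (D : front n.+1) f : is_coloring R D f ->
  forall i, cyclen R (f i) = cyclen R (f ord0).
Proof.
move=> Hf.
suff H : forall k, k < n.+1 -> cyclen R (f (inord k)) = cyclen R (f ord0).
  by move=> i; rewrite -(inord_val i) H.
elim=> [|k IH] Hk.
  by congr (cyclen R (f _)); apply: val_inj; rewrite /= inordK.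
have -> : (inord k.+1 : 'I_n.+1) = ordS (inord k).
  apply: val_inj; rewrite /= !inordK ?modn_small //; exact: ltnW.
by rewrite (coloring_step _ Hf) IH // ltnW.
Qed.

End Aux.

Theorem theorem3p10 (X : finType) (R : GLRack X) (N : nat) (D : front N) :
  0 < N ->
  Col R D = \sum_(k <- cycle_lengths R) Col_in R (Bset R k) D.
Proof.
case: N D => // n D _.
set S := [set f : {ffun 'I_n.+1 -> X} | is_coloring R D f].
have -> : Col R D = #|S|.
  apply: eq_card => f; rewrite !inE; case: is_coloring => //=.
  by apply/forallP => i; rewrite inE.
have HC k : Col_in R (Bset R k) D = \sum_(f in S) (cyclen R (f ord0) == k).
  rewrite /Col_in -sum1_card big_mkcond [RHS]big_mkcond /=; apply: eq_bigr => f _.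
  rewrite !inE; case Hf: is_coloring => //=.
  have -> : [forall i, f i \in Bset R k] = (cyclen R (f ord0) == k).
    apply/forallP/idP => [/(_ ord0)|/eqP Hk i]; first by rewrite inE.
    by rewrite inE (coloring_const Hf) Hk.
  by case: eqP.
under eq_bigr do rewrite HC.
rewrite exchange_big /= -sum1_card; apply: eq_bigr => f _.
set a := cyclen R (f ord0).
have -> : \sum_(k <- cycle_lengths R) (a == k : nat) = \sum_(k <- cycle_lengths R | a == k) 1.
  by rewrite [RHS]big_mkcond; apply: eq_bigr => k _; case: eqP.
rewrite sum1_count (@eq_count _ _ (pred1 a)); last by move=> k /=; rewrite eq_sym.
rewrite count_uniq_mem ?undup_uniq // mem_undup.
by rewrite (map_f (fun x => cyclen R x)) // mem_enum.
Qed.
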